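(* Let $\alpha\in(0,1]$ and let $(c,\{n_{h,\bar h}\})$ be a unitary, modular invariant 2D CFT spectrum in the sense of the context, with central charge $c\geqslant 0$. Define the error term $$\mathcal{E}(\beta_L,\beta_R):=\log Z(\beta_L,\beta_R)-\frac{c}{24}(\beta_L+\beta_R).$$ Then for every $(\beta_L,\beta_R)\in\mathcal{D}_\alpha$ the algorithm $\mathsf{A}_\alpha$ (see context) started at $(\beta_L,\beta_R)$ is well defined and stops after a finite number $N$ of points $(\beta_L^{(1)},\beta_R^{(1)}),\dots,(\beta_L^{(N)},\beta_R^{(N)})$; these satisfy $\beta_L^{(i)}\beta_R^{(i)}>4\pi^2$ for $i=1,\dots,N-1$ and $\beta_L^{(N)},\beta_R^{(N)}>2\pi$; and $$\mathcal{E}(\beta_L,\beta_R)\leqslant\log\left[\sum_{i=1}^{N}\tilde Z_L\big(\alpha;\beta_L^{(i)},\beta_R^{(i)}\big)+\tilde Z_H\big(\alpha;\beta_L^{(N)},\beta_R^{(N)}\big)\right].$$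
   Context: A unitary, modular invariant 2D CFT spectrum consists of a real number $c\geqslant0$ (central charge) and a countable collection of pairs $(h,\bar h)$ with $h,\bar h\geqslant0$, each with a multiplicity $n_{h,\bar h}\in\mathbb{N}$, such that the torus partition function $$Z(\beta_L,\beta_R)=\sum_{h,\bar h}n_{h,\bar h}\,e^{-(h-\frac{c}{24})\beta_L-(\bar h-\frac{c}{24})\beta_R}$$ is finite for all $\beta_L,\beta_R\in(0,\infty)$ and satisfies $Z(\beta_L,\beta_R)=Z(4\pi^2/\beta_L,4\pi^2/\beta_R)$ ($h-\bar h$ need not be an integer). For $\alpha\in(0,1]$ define $$\tilde Z_L(\alpha;\beta_L,\beta_R)=\sum_{\min(h,\bar h)\leqslant\frac{\alpha c}{24}}n_{h,\bar h}e^{-h\beta_L-\bar h\beta_R},\qquad \tilde Z_H(\alpha;\beta_L,\beta_R)=\sum_{h,\bar h>\frac{\alpha c}{24}}n_{h,\bar h}e^{-h\beta_L-\bar h\beta_R}.$$ Let $\phi_\alpha(\beta)=\max\left\{\frac{4\pi^2}{\beta},\ \frac12\left(\alpha(4\pi-\beta)+\sqrt{\alpha^2(4\pi-\beta)^2+16\pi^2(1-\alpha)}\right)\right\}$ and $$\mathcal{D}_\alpha=\{(\beta_L,\beta_R):\ \beta_R>2\pi,\ \beta_L>\phi_\alpha(\beta_R)\}\cup\{(\beta_L,\beta_R):\ \beta_L>2\pi,\ \beta_R>\phi_\alpha(\beta_L)\}.$$ Algorithm $\mathsf{A}_\alpha$: set $(\beta_L^{(1)},\beta_R^{(1)})=(\beta_L,\beta_R)$.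 Given $(b_L,b_R)=(\beta_L^{(i)},\beta_R^{(i)})$: (1) if $b_L>2\pi$ and $b_R>2\pi$, stop and set $N=i$. (2) If $b_L\leqslant2\pi$: put $\tilde b_L=b_L$ if $b_L<2\pi$ and $\tilde b_L=\frac{8\pi^2}{\alpha(b_R-2\pi)+4\pi}$ if $b_L=2\pi$; let $t>0$ be the unique positive solution of $\alpha b_R+\tilde b_L-\frac{4\pi^2}{\tilde b_L}+(1-\alpha)\frac{4\pi^2}{t}-t=0$; set $(\beta_L^{(i+1)},\beta_R^{(i+1)})=(4\pi^2/\tilde b_L,\ t)$. (3) Otherwise ($b_L>2\pi$, $b_R\leqslant2\pi$): do the same with the roles of $L$ and $R$ exchanged, i.e. $\tilde b_R=b_R$ if $b_R<2\pi$, $\tilde b_R=\frac{8\pi^2}{\alpha(b_L-2\pi)+4\pi}$ if $b_R=2\pi$, $t>0$ the unique positive solution of $\alpha b_L+\tilde b_R-\frac{4\pi^2}{\tilde b_R}+(1-\alpha)\frac{4\pi^2}{t}-t=0$, and $(\beta_L^{(i+1)},\beta_R^{(i+1)})=(t,\ 4\pi^2/\tilde b_R)$. *)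

(* Defs.v *)
From Stdlib Require Import Reals Lra.
From Coquelicot Require Import Coquelicot.
Open Scope R_scope.

(* A spectrum is encoded by an index set nat: the k-th entry is the pair
   (h k, hb k) with multiplicity n k. *)

Definition Zpart (c : R) (h hb : nat -> R) (n : nat -> nat) (bL bR : R) : R :=
  Series (fun k => INR (n k) * exp (- (h k - c / 24) * bL - (hb k - c / 24) * bR)).

Definition cft_spectrum (c : R) (h hb : nat -> R) (n : nat -> nat) : Prop :=
  0 <= c /\
  (forall k, 0 <= h k /\ 0 <= hb k) /\
  (forall bL bR, 0 < bL -> 0 < bR ->
     ex_series (fun k => INR (n k) * exp (- (h k - c / 24) * bL - (hb k - c / 24) * bR))) /\
  (forall bL bR, 0 < bL -> 0 < bR ->
     Zpart c h hb n bL bR = Zpart c h hb n (4 * PI ^ 2 / bL) (4 * PI ^ 2 / bR)).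

Definition ZtL (c : R) (h hb : nat -> R) (n : nat -> nat) (alpha bL bR : R) : R :=
  Series (fun k => if Rle_dec (Rmin (h k) (hb k)) (alpha * c / 24)
                   then INR (n k) * exp (- h k * bL - hb k * bR) else 0).

Definition ZtH (c : R) (h hb : nat -> R) (n : nat -> nat) (alpha bL bR : R) : R :=
  Series (fun k => if Rlt_dec (alpha * c / 24) (h k) then
                     if Rlt_dec (alpha * c / 24) (hb k)
                     then INR (n k) * exp (- h k * bL - hb k * bR) else 0
                   else 0).

Definition Eerr (c : R) (h hb : nat -> R) (n : nat -> nat) (bL bR : R) : R :=
  ln (Zpart c h hb n bL bR) - c / 24 * (bL + bR).

Definition phi (alpha b : R) : R :=
  Rmax (4 * PI ^ 2 / b)
       ((alpha * (4 * PI - b)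
         + sqrt (alpha ^ 2 * (4 * PI - b) ^ 2 + 16 * PI ^ 2 * (1 - alpha))) / 2).

Definition in_D (alpha bL bR : R) : Prop :=
  (2 * PI < bR /\ phi alpha bR < bL) \/ (2 * PI < bL /\ phi alpha bL < bR).

(* tilde b for the coordinate b (<= 2 pi), other coordinate bo *)
Definition btilde (alpha b bo : R) : R :=
  if Rlt_dec b (2 * PI) then b
  else 8 * PI ^ 2 / (alpha * (bo - 2 * PI) + 4 * PI).

Definition step_eq (alpha x y t : R) : Prop :=
  alpha * x + y - 4 * PI ^ 2 / y + (1 - alpha) * (4 * PI ^ 2 / t) - t = 0.

Definition unique_pos_sol (alpha x y t : R) : Prop :=
  0 < t /\ step_eq alpha x y t /\
  (forall s, 0 < s -> step_eq alpha x y s -> s = t).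

Definition stops (b : R * R) : Prop := 2 * PI < fst b /\ 2 * PI < snd b.

Definition alg_step (alpha : R) (b b' : R * R) : Prop :=
  (fst b <= 2 * PI /\
   exists t, unique_pos_sol alpha (snd b) (btilde alpha (fst b) (snd b)) t /\
             b' = (4 * PI ^ 2 / btilde alpha (fst b) (snd b), t))
  \/
  (2 * PI < fst b /\ snd b <= 2 * PI /\
   exists t, unique_pos_sol alpha (fst b) (btilde alpha (snd b) (fst b)) t /\
             b' = (t, 4 * PI ^ 2 / btilde alpha (snd b) (fst b))).

Definition alg_run (alpha bL bR : R) (N : nat) (pts : nat -> R * R) : Prop :=
  (1 <= N)%nat /\ pts 1%nat = (bL, bR) /\
  (forall i, (1 <= i < N)%nat -> ~ stops (pts i) /\ alg_step alpha (pts i) (pts (S i))) /\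
  stops (pts N).

Fixpoint sum1 (f : nat -> R) (N : nat) : R :=
  match N with O => 0 | S m => sum1 f m + f (S m) end.

(* Main.v *)
Require Import Defs.
From Stdlib Require Import Reals Lra Psatz Lia ZArith.
From Coquelicot Require Import Coquelicot.
Open Scope R_scope.

Lemma exp_le' x y : x <= y -> exp x <= exp y.
Proof. intros H; destruct (Rle_lt_or_eq_dec _ _ H) as [H'|H'].
  left; now apply exp_increasing. subst; lra. Qed.

Lemma qfact (K A t z : R) : 0 < t -> K + A / t - t = 0 ->
  z*z - K*z - A = (z - t)*(z + A/t).
Proof. intros Ht He. assert (HK : K = t - A/t) by lra. subst K. field. lra. Qed.

Lemma quad_exists (K A : R) : 0 <= A -> (0 < A \/ 0 < K) ->
  exists t, 0 < t /\ K + A/t - t = 0.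
Proof.
  intros HA HAK.
  assert (Hnn : 0 <= K*K + 4*A) by nra.
  set (S := sqrt (K*K + 4*A)).
  assert (HS : S*S = K*K + 4*A) by (apply sqrt_sqrt; exact Hnn).
  assert (HS0 : 0 <= S) by apply sqrt_pos.
  assert (Hp : 0 < K + S).
  { destruct HAK as [H|H]; [|lra]. destruct (Rle_lt_dec (K+S) 0); [|lra]. nra. }
  exists ((K+S)/2). split; [lra|].
  assert (E : A = ((K+S)/2)*((K+S)/2 - K)) by nra.
  rewrite E at 1. field_simplify; [lra| lra].
Qed.

Lemma quad_unique (K A s t : R) : 0 <= A -> 0 < t -> 0 < s ->
  K + A/t - t = 0 -> K + A/s - s = 0 -> s = t.
Proof.
  intros HA Ht Hs Et Es.
  assert (H1 := qfact K A t s Ht Et).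
  assert (H2 : s*s - K*s - A = 0).
  { replace (s*s - K*s - A) with (- s * (K + A/s - s)) by (field; lra). rewrite Es; ring. }
  rewrite H2 in H1.
  assert (H3 : 0 < s + A/t). { assert (0 <= A/t) by (apply Rdiv_le_0_compat; lra). lra. }
  destruct (Rmult_integral _ _ (eq_sym H1)); lra.
Qed.

Lemma step_eq_iff a x yt t : step_eq a x yt t <->
  (a*x + yt - 4*PI^2/yt) + ((1-a)*(4*PI^2))/t - t = 0.
Proof.
  unfold step_eq. replace ((1-a)*(4*PI^2)/t) with ((1-a)*(4*PI^2/t)) by (unfold Rdiv; ring).
  tauto.
Qed.

Lemma div_gt a b y : 0 < y -> a*y < b -> a < b/y.
Proof. intros Hy H. apply Rmult_lt_reg_r with y; [lra|].
  replace (b/y*y) with b by (field; lra). lra. Qed.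
Lemma div_lt a b y : 0 < y -> b < a*y -> b/y < a.
Proof. intros Hy H. apply Rmult_lt_reg_r with y; [lra|].
  replace (b/y*y) with b by (field; lra). lra. Qed.
Lemma div_ge a b y : 0 < y -> a*y <= b -> a <= b/y.
Proof. intros Hy H. apply Rmult_le_reg_r with y; [lra|].
  replace (b/y*y) with b by (field; lra). lra. Qed.
Lemma div_le a b y : 0 < y -> b <= a*y -> b/y <= a.
Proof. intros Hy H. apply Rmult_le_reg_r with y; [lra|].
  replace (b/y*y) with b by (field; lra). lra. Qed.

Lemma PI2 : 0 < 2*PI.
Proof. pose proof PI_RGT_0; lra. Qed.

Lemma step_core a y x : 0 < a <= 1 -> 0 < y -> y <= 2*PI -> 2*PI < x -> 4*PI^2 < y*x ->
  exists t, unique_pos_sol a x (btilde a y x) t /\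
   0 < btilde a y x <= y /\ 4*PI^2 < btilde a y x * x /\ 2*PI < 4*PI^2 / btilde a y x /\
   4*PI^2/x <= t /\ btilde a y x < t /\ (y = 2*PI -> 2*PI < t).
Proof.
  intros Ha Hy Hy2 Hx Hyx.
  pose proof PI_RGT_0 as Hpi.
  assert (Hpi2 : 0 < PI^2) by nra.
  set (yt := btilde a y x).
  assert (Hyt : 0 < yt <= y /\ 4*PI^2 < yt * x /\ 2*PI < 4*PI^2/yt /\
     (y = 2*PI -> (4*PI^2 - 2*PI*(a*x + yt - 4*PI^2/yt) - (1-a)*(4*PI^2)) < 0)).
  { unfold yt, btilde. destruct (Rlt_dec y (2*PI)) as [Hl|Hl].
    - split; [lra|]. split; [lra|]. split; [|intros; lra].
      apply div_gt; nra.
    - assert (Hye : y = 2*PI) by lra.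
      set (d := a*(x-2*PI)).
      assert (Hd : 0 < d) by (unfold d; nra).
      replace (a*(x-2*PI)+4*PI) with (d+4*PI) by (unfold d; ring).
      assert (Hc : 4*PI^2/(8*PI^2/(d+4*PI)) = (d+4*PI)/2) by (field; nra).
      rewrite Hc.
      split. { split. apply Rdiv_lt_0_compat; nra.
        apply div_le; nra. }
      split. { replace (8*PI^2/(d+4*PI)*x) with ((8*PI^2*x)/(d+4*PI)) by (field; lra).
        apply div_gt; [lra|]. unfold d.
        assert (0 < PI^2 * ((2-a)*(x-2*PI))) by (apply Rmult_lt_0_compat; [nra|apply Rmult_lt_0_compat; lra]).
        nra. }
      split; [lra|]. intros _.
      assert (Hax : a*x = 2*PI*a + d) by (unfold d; ring).
      rewrite Hax.
      assert (H8 : 8*PI^2/(d+4*PI) = 2*PI - d/2 + d*d/(2*(d+4*PI))) by (field; lra).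
      rewrite H8.
      assert (0 < d*d/(2*(d+4*PI))) by (apply Rdiv_lt_0_compat; nra).
      nra. }
  destruct Hyt as [[Hyt0 Hyty] [Hytx [Hyt2 Hy2pi]]].
  set (K := a*x + yt - 4*PI^2/yt). set (A := (1-a)*(4*PI^2)).
  assert (HA : 0 <= A) by (unfold A; nra).
  assert (HK : 0 < A \/ 0 < K).
  { destruct (Rlt_dec a 1) as [Hl|Hl]. left; unfold A; nra.
    right. assert (a = 1) by lra. subst a. unfold K.
    assert (4*PI^2/yt < x). { apply div_lt; nra. }
    lra. }
  destruct (quad_exists K A HA HK) as [t [Ht Et]].
  exists t.
  assert (Hq := qfact K A t).
  assert (HAt : 0 <= A/t) by (apply Rdiv_le_0_compat; lra).
  split.
  { split; [exact Ht|]. split. exact (proj2 (step_eq_iff _ _ _ _) Et).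
    intros s Hs Es. apply step_eq_iff in Es. exact (quad_unique K A s t HA Ht Hs Et Es). }
  split; [lra|]. split; [lra|]. split; [lra|].
  split.
  { (* q(u) <= 0 with u = c4/x *)
    set (u := 4*PI^2/x).
    assert (Hu : 0 < u) by (unfold u; apply Rdiv_lt_0_compat; nra).
    assert (Hqu : u*u - K*u - A = (u - yt)*(u + 4*PI^2/yt)).
    { unfold u, K, A. field. lra. }
    assert (Huy : u < yt). { unfold u. apply div_lt; nra. }
    assert (0 < 4*PI^2/yt) by (apply Rdiv_lt_0_compat; nra).
    rewrite (Hq u Ht Et) in Hqu.
    destruct (Rle_lt_dec u t); [lra|]. nra. }
  split.
  { assert (Hqy : yt*yt - K*yt - A = a*(4*PI^2 - yt*x)).
    { unfold K, A. field. lra. }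
    rewrite (Hq yt Ht Et) in Hqy.
    destruct (Rle_lt_dec t yt); [|lra]. nra. }
  intros Hye. specialize (Hy2pi Hye). fold K A in Hy2pi.
  replace (4*PI^2) with ((2*PI)*(2*PI)) in Hy2pi at 1 by ring.
  replace (2*PI*K) with (K*(2*PI)) in Hy2pi by ring.
  rewrite (Hq (2*PI) Ht Et) in Hy2pi.
  destruct (Rle_lt_dec t (2*PI)); [|lra]. nra.
Qed.

Definition pt (o : bool) (y x : R) : R * R := if o then (y, x) else (x, y).

Definition RunP a p N (pts : nat -> R * R) : Prop :=
  (1 <= N)%nat /\ pts 1%nat = p /\
  (forall i, (1 <= i < N)%nat -> ~ stops (pts i) /\ alg_step a (pts i) (pts (S i)) /\
      4*PI^2 < fst (pts i) * snd (pts i) /\ 0 < fst (pts i) /\ 0 < snd (pts i)) /\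
  stops (pts N).

Lemma RunP_one a p : stops p -> RunP a p 1 (fun _ => p).
Proof. intros H. split; [lia|]. split; [reflexivity|]. split; [intros; lia|exact H]. Qed.

Lemma RunP_cons a p q N pts : RunP a q N pts -> ~ stops p -> alg_step a p q ->
  4*PI^2 < fst p * snd p -> 0 < fst p -> 0 < snd p ->
  RunP a p (S N) (fun i => if (i <=? 1)%nat then p else pts (i-1)%nat).
Proof.
  intros [HN [H1 [Hs HNs]]] Hp Hst Hpr H1p H2p.
  split; [lia|]. split; [reflexivity|]. split.
  - intros i Hi. destruct (Nat.eq_dec i 1) as [->|Hne].
    + simpl. rewrite H1. tauto.
    + assert (Hb : (i <=? 1)%nat = false) by (apply Nat.leb_gt; lia).
      assert (Hb' : (S i <=? 1)%nat = false) by (apply Nat.leb_gt; lia).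
      rewrite Hb, Hb'. replace (S i - 1)%nat with (S (i-1))%nat by lia.
      apply Hs. lia.
  - assert (Hb : (S N <=? 1)%nat = false) by (apply Nat.leb_gt; lia).
    rewrite Hb. replace (S N - 1)%nat with N by lia. exact HNs.
Qed.

Lemma RunP_cons_ex a p q : (exists N pts, RunP a q N pts) -> ~ stops p -> alg_step a p q ->
  4*PI^2 < fst p * snd p -> 0 < fst p -> 0 < snd p ->
  exists N pts, RunP a p N pts.
Proof. intros [N [pts H]] ? ? ? ? ?. eexists; eexists. eapply RunP_cons; eauto. Qed.

Lemma stops_pt o y x : 2*PI < y -> 2*PI < x -> stops (pt o y x).
Proof. destruct o; unfold stops; simpl; lra. Qed.

Lemma alg_step_pt a o y x t : y <= 2*PI -> 2*PI < x ->
  unique_pos_sol a x (btilde a y x) t ->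
  alg_step a (pt o y x) (pt (negb o) t (4*PI^2/btilde a y x)).
Proof.
  intros Hy Hx Ht. destruct o; simpl.
  - left. simpl. split; [exact Hy|]. exists t. split; [exact Ht|reflexivity].
  - right. simpl. split; [exact Hx|]. split; [exact Hy|]. exists t. split; [exact Ht|reflexivity].
Qed.

Lemma pt_facts o y x : 0 < y -> 0 < x -> y <= 2*PI -> 4*PI^2 < y*x ->
  ~ stops (pt o y x) /\ 4*PI^2 < fst (pt o y x) * snd (pt o y x) /\
  0 < fst (pt o y x) /\ 0 < snd (pt o y x).
Proof.
  intros. destruct o; unfold stops; simpl; repeat split; try lra;
  rewrite Rmult_comm; lra.
Qed.

Lemma concave_q y1 y I0 e m : y1 <= y -> y <= 2*PI -> y1 < 2*PI ->
  m <= -(y1*y1 - I0*y1 + e) -> m <= -((2*PI)*(2*PI) - I0*(2*PI) + e) ->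
  m <= -(y*y - I0*y + e).
Proof.
  intros H1 H2 H3 Hm1 Hm2. set (P := 2*PI) in *.
  assert (Hid : (P - y1)*(-(y*y - I0*y + e)) =
     (P - y)*(-(y1*y1 - I0*y1+e)) + (y - y1)*(-(P*P - I0*P + e)) + (P-y1)*(y-y1)*(P-y)) by ring.
  assert (A1 : (P - y)*m <= (P - y)*(-(y1*y1 - I0*y1+e))) by (apply Rmult_le_compat_l; lra).
  assert (A2 : (y - y1)*m <= (y - y1)*(-(P*P - I0*P + e))) by (apply Rmult_le_compat_l; lra).
  assert (A3 : 0 <= (P-y1)*(y-y1)*(P-y)) by (apply Rmult_le_pos; [apply Rmult_le_pos|]; lra).
  assert (A4 : (P - y1)*m <= (P - y1)*(-(y*y - I0*y + e))) by nra.
  apply Rmult_le_reg_l with (P - y1); lra.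
Qed.

Lemma run_rec a y1 I0 m D (M : nat) : 0 < a <= 1 -> 0 < y1 -> 0 < m ->
  D = 2*PI + 4*PI^2/y1 ->
  m <= -(y1*y1 - I0*y1 + (2*a-1)*(4*PI^2)) ->
  m <= -((2*PI)*(2*PI) - I0*(2*PI) + (2*a-1)*(4*PI^2)) ->
  forall o y x, y1 <= y -> 2*PI < x -> 4*PI^2 < y*x ->
  a*x + y - (1-a)*(4*PI^2)/y = I0 -> 2*PI - y <= INR M * (m/D) ->
  exists N pts, RunP a (pt o y x) N pts.
Proof.
  intros Ha Hy1 Hm HD Hm1 Hm2.
  pose proof PI_RGT_0 as Hpi. assert (Hpi2 : 0 < PI^2) by nra.
  assert (HD0 : 0 < D). { rewrite HD. assert (0 < 4*PI^2/y1) by (apply Rdiv_lt_0_compat; lra). lra. }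
  assert (Hdel : 0 < m/D) by (apply Rdiv_lt_0_compat; lra).
  induction M as [|M IH]; intros o y x Hy Hx Hyx HI HM.
  -
    destruct (Rlt_le_dec (2*PI) y) as [Hl|Hl].
    + exists 1%nat, (fun _ => pt o y x). apply RunP_one. apply stops_pt; lra.
    + assert (Hye : y = 2*PI) by (simpl in HM; lra).
      destruct (step_core a y x Ha ltac:(lra) Hl Hx Hyx) as [t [Ht [Hb1 [Hb2 [Hb3 [Hb4 [Hb5 Hb6]]]]]]].
      set (q := pt (negb o) t (4*PI^2/btilde a y x)).
      destruct (pt_facts o y x) as [F1 [F2 [F3 F4]]]; try lra.
      apply RunP_cons_ex with q; auto.
      exists 1%nat, (fun _ => q). apply RunP_one. unfold q. apply stops_pt; auto.
      apply alg_step_pt; auto.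
  - destruct (Rlt_le_dec (2*PI) y) as [Hl|Hl].
    + exists 1%nat, (fun _ => pt o y x). apply RunP_one. apply stops_pt; lra.
    + destruct (step_core a y x Ha ltac:(lra) Hl Hx Hyx) as [t [Ht [Hb1 [Hb2 [Hb3 [Hb4 [Hb5 Hb6]]]]]]].
      set (q := pt (negb o) t (4*PI^2/btilde a y x)).
      destruct (pt_facts o y x) as [F1 [F2 [F3 F4]]]; try lra.
      assert (Hst := alg_step_pt a o y x t Hl Hx Ht).
      destruct (Req_dec y (2*PI)) as [Hye|Hyl].
      * apply RunP_cons_ex with q; auto.
        exists 1%nat, (fun _ => q). apply RunP_one. unfold q. apply stops_pt; auto.
      * assert (Hyl' : y < 2*PI) by lra.
        assert (Hbt : btilde a y x = y) by (unfold btilde; destruct (Rlt_dec y (2*PI)); lra).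
        rewrite Hbt in *.
        destruct Ht as [Ht0 [Heq _]].
        unfold step_eq in Heq.
        assert (Hy0 : 0 < y) by lra.
        assert (HI' : a*(4*PI^2/y) + t - (1-a)*(4*PI^2)/t = I0).
        { rewrite <- HI. replace ((1-a)*(4*PI^2)/t) with ((1-a)*(4*PI^2/t)) by (unfold Rdiv; ring).
          replace ((1-a)*(4*PI^2)/y) with ((1-a)*(4*PI^2/y)) by (unfold Rdiv; ring). lra. }
        assert (Hid : (t - y)*(t*y + (1-a)*(4*PI^2)) = a*(x*y - 4*PI^2)*t).
        { assert (E : t*y*(a*x + y - 4*PI^2/y + (1-a)*(4*PI^2/t) - t) = 0) by (rewrite Heq; ring).
          replace ((t - y)*(t*y + (1-a)*(4*PI^2))) with
            (a*(x*y - 4*PI^2)*t - t*y*(a*x + y - 4*PI^2/y + (1-a)*(4*PI^2/t) - t)) by (field; lra).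
          rewrite E; ring. }
        assert (Hpy : -(y*y - I0*y + (2*a-1)*(4*PI^2)) = a*(x*y - 4*PI^2)).
        { rewrite <- HI. field. lra. }
        assert (Hmy : m <= a*(x*y - 4*PI^2)).
        { rewrite <- Hpy. apply (concave_q y1); lra. }
        assert (Hty : t - y > 0) by lra.
        assert (HtD : (t*y + (1-a)*(4*PI^2)) <= t * D).
        { rewrite HD. replace (t*(2*PI + 4*PI^2/y1)) with (2*PI*t + 4*PI^2*(t/y1)) by (unfold Rdiv; ring).
          assert (1 <= t/y1) by (apply div_ge; lra).
          assert (0 <= a*(4*PI^2)) by nra. nra. }
        assert (Hstep : m/D <= t - y).
        { apply div_le; [lra|].
          assert (m*t <= (t-y)*(t*D)).
          { rewrite <- Rmult_assoc. 
            assert ((t-y)*(t*y + (1-a)*(4*PI^2)) <= (t-y)*(t*D)) by (apply Rmult_le_compat_l; lra).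
            assert (m*t <= a*(x*y - 4*PI^2)*t) by (apply Rmult_le_compat_r; lra).
            lra. }
          assert (m <= (t-y)*D) ; [|lra].
          apply Rmult_le_reg_r with t; [lra|]. lra. }
        apply RunP_cons_ex with (pt (negb o) t (4*PI^2/y)); auto.
        apply IH.
        -- lra.
        -- exact Hb3.
        -- replace (t*(4*PI^2/y)) with (4*PI^2*(t/y)) by (unfold Rdiv; ring).
           assert (1 < t/y) by (apply div_gt; lra). nra.
        -- exact HI'.
        -- rewrite S_INR in HM. lra.
Qed.

Lemma arch_nat r : exists M : nat, r <= INR M.
Proof.
  destruct (Rle_lt_dec r 0) as [H|H].
  - exists 0%nat. simpl. lra.
  - destruct (archimed r) as [H1 H2].
    assert (Hz : (0 <= up r)%Z). { apply le_IZR. lra. }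
    exists (Z.to_nat (up r)). rewrite INR_IZR_INZ. rewrite Z2Nat.id by exact Hz. lra.
Qed.

Lemma init_run a o y x : 0 < a <= 1 -> 2*PI < x -> phi a x < y ->
  exists N pts, RunP a (pt o y x) N pts.
Proof.
  intros Ha Hx Hphi.
  pose proof PI_RGT_0 as Hpi. assert (Hpi2 : 0 < PI^2) by nra.
  unfold phi in Hphi.
  assert (H1 : 4*PI^2/x < y) by (eapply Rle_lt_trans; [apply Rmax_l|exact Hphi]).
  assert (H2 : (a*(4*PI - x) + sqrt (a^2*(4*PI-x)^2 + 16*PI^2*(1-a)))/2 < y)
    by (eapply Rle_lt_trans; [apply Rmax_r|exact Hphi]).
  assert (Hx0 : 0 < x) by lra.
  assert (Hc0 : 0 < 4*PI^2/x) by (apply Rdiv_lt_0_compat; lra).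
  assert (Hy0 : 0 < y) by lra.
  assert (Hyx : 4*PI^2 < y*x).
  { assert (E : 4*PI^2 = 4*PI^2/x*x) by (field; lra). rewrite E at 1.
    apply Rmult_lt_compat_r; lra. }
  set (B := a*(4*PI - x)).
  set (Sq := sqrt (a^2*(4*PI-x)^2 + 16*PI^2*(1-a))).
  assert (HSq0 : 0 <= Sq) by apply sqrt_pos.
  assert (HSq : Sq*Sq = B*B + 4*((1-a)*(4*PI^2))).
  { unfold Sq. rewrite sqrt_sqrt. unfold B. ring.
    assert (0 <= 16*PI^2*(1-a)) by nra. assert (0 <= a^2*(4*PI-x)^2) by (apply Rmult_le_pos; apply pow2_ge_0).
    lra. }
  fold B Sq in H2.
  assert (Hq : y*y - B*y - (1-a)*(4*PI^2) > 0) by nra.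
  set (I0 := a*x + y - (1-a)*(4*PI^2)/y).
  assert (HI0 : I0 - 4*PI*a > 0).
  { unfold I0. replace (a*x + y - (1-a)*(4*PI^2)/y - 4*PI*a) with ((y*y - B*y - (1-a)*(4*PI^2))/y)
      by (unfold B; field; lra). apply Rdiv_lt_0_compat; lra. }
  set (m := Rmin (a*(x*y - 4*PI^2)) (2*PI*(I0 - 4*PI*a))).
  assert (Hm : 0 < m). { unfold m. apply Rmin_glb_lt; nra. }
  set (D := 2*PI + 4*PI^2/y).
  assert (HD : 0 < D). { unfold D. assert (0 < 4*PI^2/y) by (apply Rdiv_lt_0_compat; lra). lra. }
  destruct (arch_nat ((2*PI - y)/(m/D))) as [M HM].
  assert (Hdel : 0 < m/D) by (apply Rdiv_lt_0_compat; lra).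
  apply (run_rec a y I0 m D M); auto; try lra.
  - replace (-(y*y - I0*y + (2*a-1)*(4*PI^2))) with (a*(x*y - 4*PI^2)) by (unfold I0; field; lra).
    apply Rmin_l.
  - replace (-((2*PI)*(2*PI) - I0*(2*PI) + (2*a-1)*(4*PI^2))) with (2*PI*(I0 - 4*PI*a)) by ring.
    apply Rmin_r.
  - apply Rmult_le_reg_r with (/(m/D)). apply Rinv_0_lt_compat; lra.
    rewrite Rmult_assoc, Rinv_r by lra. rewrite Rmult_1_r. exact HM.
Qed.

Lemma run_exists a bL bR : 0 < a <= 1 -> in_D a bL bR ->
  exists N pts, RunP a (bL, bR) N pts.
Proof.
  intros Ha [[H1 H2]|[H1 H2]].
  - exact (init_run a true bL bR Ha H1 H2).
  - exact (init_run a false bR bL Ha H1 H2).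
Qed.

Definition zt (h hb : nat -> R) (n : nat -> nat) (a b : R) (k : nat) : R :=
  INR (n k) * exp (- h k * a - hb k * b).
Definition Zt h hb n a b := Series (zt h hb n a b).

Lemma zt_nonneg h hb n a b k : 0 <= zt h hb n a b k.
Proof. unfold zt. apply Rmult_le_pos; [apply pos_INR | left; apply exp_pos]. Qed.

Lemma Series_zero f : (forall k, f k = 0) -> Series f = 0.
Proof. intros H. rewrite (Series_ext f (fun k => 0 * f k)) by (intro k; rewrite H; ring).
  rewrite Series_scal_l. ring. Qed.



Lemma term_le_Series f k : (forall j, 0 <= f j) -> ex_series f -> f k <= Series f.
Proof.
  intros H He. rewrite (Series_incr_n f (S k)) by (lia || exact He). simpl pred.
  assert (H1 : f k <= sum_f_R0 f k).
  { destruct k. simpl; lra. simpl. pose proof (cond_pos_sum f k H). lra. }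
  assert (H2 : 0 <= Series (fun j => f (S k + j)%nat)).
  { rewrite <- (Series_zero (fun _ => 0)) by reflexivity. apply Series_le.
    intros; split; [lra|apply H]. apply (ex_series_incr_n f (S k)). exact He. }
  lra.
Qed.

Section Spec.
Variables (c : R) (h hb : nat -> R) (n : nat -> nat).
Hypothesis Hs : cft_spectrum c h hb n.

Lemma zt_ex a b : 0 < a -> 0 < b -> ex_series (zt h hb n a b).
Proof.
  intros Ha Hb. destruct Hs as [_ [_ [Hex _]]].
  apply ex_series_ext with (fun k => scal (exp (- (c/24*(a+b))))
     (INR (n k) * exp (- (h k - c / 24) * a - (hb k - c / 24) * b))).
  - intros k. unfold zt. change (scal ?x ?y) with (x * y).
    rewrite <- Rmult_assoc, (Rmult_comm (exp _)), Rmult_assoc, <- exp_plus.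
    f_equal. f_equal. ring.
  - exact (@ex_series_scal_l R_AbsRing R_NormedModule _ _ (Hex a b Ha Hb)).
Qed.

Lemma Zpart_Zt a b : Zpart c h hb n a b = exp (c/24*(a+b)) * Zt h hb n a b.
Proof.
  unfold Zpart, Zt. rewrite <- Series_scal_l. apply Series_ext. intros k. unfold zt.
  rewrite <- Rmult_assoc, (Rmult_comm (exp _)), Rmult_assoc, <- exp_plus.
  f_equal. f_equal. ring.
Qed.

Lemma Zt_nonneg a b : 0 < a -> 0 < b -> 0 <= Zt h hb n a b.
Proof. intros. unfold Zt. rewrite <- (Series_zero (fun _ => 0)) by reflexivity.
  apply Series_le. intros; split; [lra|apply zt_nonneg]. apply zt_ex; auto. Qed.

Lemma Zt_split al a b : 0 < a -> 0 < b ->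
  Zt h hb n a b = ZtL c h hb n al a b + ZtH c h hb n al a b.
Proof.
  intros Ha Hb. unfold ZtL, ZtH, Zt.
  assert (Hn : forall x : R, norm x = Rabs x) by reflexivity.
  rewrite <- Series_plus.
  - apply Series_ext. intros k. unfold zt.
    destruct (Rle_dec _ _) as [H1|H1]; destruct (Rlt_dec _ (h k)) as [H2|H2];
      try destruct (Rlt_dec _ (hb k)) as [H3|H3]; try ring.
    exfalso. unfold Rmin in H1. destruct (Rle_dec (h k) (hb k)); lra.
    exfalso. apply H1. unfold Rmin. destruct (Rle_dec (h k) (hb k)); lra.
    exfalso. apply H1. unfold Rmin. destruct (Rle_dec (h k) (hb k)); lra.
  - apply (@ex_series_le R_AbsRing R_CompleteNormedModule) with (zt h hb n a b); [|apply zt_ex; auto].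
    intros k. rewrite Hn. destruct (Rle_dec _ _).
    + rewrite Rabs_pos_eq; [unfold zt; lra|apply (zt_nonneg h hb n a b k)].
    + rewrite Rabs_R0. apply zt_nonneg.
  - apply (@ex_series_le R_AbsRing R_CompleteNormedModule) with (zt h hb n a b); [|apply zt_ex; auto].
    intros k. rewrite Hn. destruct (Rlt_dec _ _); [destruct (Rlt_dec _ _)|].
    + rewrite Rabs_pos_eq; [unfold zt; lra|apply (zt_nonneg h hb n a b k)].
    + rewrite Rabs_R0. apply zt_nonneg.
    + rewrite Rabs_R0. apply zt_nonneg.
Qed.

Lemma core al p1 p2 q1 q2 : 0 <= al -> 0 < q1 <= p1 -> 0 < q2 <= p2 ->
  ZtH c h hb n al p1 p2 <=
  exp (c/24*(- al*(p1-q1) - al*(p2-q2) + 4*PI^2/q1 + 4*PI^2/q2 - q1 - q2))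
   * Zt h hb n (4*PI^2/q1) (4*PI^2/q2).
Proof.
  intros Hal [Hq1 Hp1] [Hq2 Hp2].
  pose proof PI_RGT_0 as Hpi. assert (Hpi2 : 0 < PI^2) by nra.
  set (E1 := exp (- (al*c/24) * ((p1-q1) + (p2-q2)))).
  assert (Step1 : ZtH c h hb n al p1 p2 <= E1 * Zt h hb n q1 q2).
  { unfold ZtH, Zt. rewrite <- Series_scal_l. apply Series_le.
    - intros k. unfold zt, E1.
      assert (0 <= INR (n k) * exp (- h k * p1 - hb k * p2))
        by (apply Rmult_le_pos; [apply pos_INR|left; apply exp_pos]).
      assert (0 <= exp (- (al * c / 24) * (p1 - q1 + (p2 - q2))) *
         (INR (n k) * exp (- h k * q1 - hb k * q2))).
      { apply Rmult_le_pos; [left; apply exp_pos|]. apply Rmult_le_pos; [apply pos_INR|left; apply exp_pos]. }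
      destruct (Rlt_dec _ (h k)) as [H1|H1]; [destruct (Rlt_dec _ (hb k)) as [H2|H2]|]; try lra.
      split; [lra|].
      rewrite (Rmult_comm (exp _)), Rmult_assoc, <- exp_plus.
      apply Rmult_le_compat_l; [apply pos_INR|]. apply exp_le'.
      assert (al*c/24*(p1-q1) <= h k * (p1 - q1)) by (apply Rmult_le_compat_r; lra).
      assert (al*c/24*(p2-q2) <= hb k * (p2 - q2)) by (apply Rmult_le_compat_r; lra).
      nra.
    - apply ex_series_ext with (fun k => scal E1 (zt h hb n q1 q2 k)). reflexivity.
      exact (@ex_series_scal_l R_AbsRing R_NormedModule _ _ (zt_ex q1 q2 Hq1 Hq2)). }
  assert (Hmod : Zt h hb n q1 q2 = exp (- (c/24*(q1+q2))) * exp (c/24*(4*PI^2/q1 + 4*PI^2/q2))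
      * Zt h hb n (4*PI^2/q1) (4*PI^2/q2)).
  { destruct Hs as [_ [_ [_ Hmodular]]].
    pose proof (Zpart_Zt q1 q2) as Z1.
    pose proof (Zpart_Zt (4*PI^2/q1) (4*PI^2/q2)) as Z2.
    rewrite (Hmodular q1 q2 Hq1 Hq2) in Z1. rewrite Z2 in Z1.
    rewrite Rmult_assoc, Z1, <- Rmult_assoc, <- exp_plus.
    replace (- (c / 24 * (q1 + q2)) + c / 24 * (q1 + q2)) with 0 by ring. rewrite exp_0. ring. }
  rewrite Hmod in Step1. eapply Rle_trans; [exact Step1|].
  assert (Eq : - (al*c/24)*(p1-q1+(p2-q2)) + -(c/24*(q1+q2)) + c/24*(4*PI^2/q1+4*PI^2/q2) =
     c/24*(- al*(p1-q1) - al*(p2-q2) + 4*PI^2/q1 + 4*PI^2/q2 - q1 - q2)) by (unfold Rdiv; ring).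
  right. unfold E1. rewrite <- !Rmult_assoc, <- !exp_plus. rewrite Eq. reflexivity.
Qed.

End Spec.

Lemma exp_le1 x : x <= 0 -> exp x <= 1.
Proof. intros H. rewrite <- exp_0. apply exp_le'. exact H. Qed.

Lemma step_ineq c h hb n a b b' : cft_spectrum c h hb n -> 0 < a <= 1 ->
  0 < fst b -> 0 < snd b -> 4*PI^2 < fst b * snd b -> alg_step a b b' ->
  ZtH c h hb n a (fst b) (snd b) <= Zt h hb n (fst b') (snd b').
Proof.
  intros Hs Ha H1 H2 Hp Hst.
  pose proof PI_RGT_0 as Hpi. assert (Hpi2 : 0 < PI^2) by nra.
  assert (Hc : 0 <= c) by (destruct Hs; lra).
  assert (Hc24 : 0 <= c/24) by lra.
  destruct Hst as [[Hle [t [Ht Eb']]] | [Hgt [Hle [t [Ht Eb']]]]].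
  - destruct b as [y x]; cbn [fst snd] in *. subst b'. cbn [fst snd].
    assert (Hx : 2*PI < x) by nra.
    destruct (step_core a y x Ha H1 Hle Hx Hp) as [t0 [Ht0 [Hb1 [Hb2 [Hb3 [Hb4 [Hb5 Hb6]]]]]]].
    assert (Et : t0 = t) by (destruct Ht as [_ [_ U]]; destruct Ht0 as [P0 [Q0 _]]; apply U; auto).
    subst t0. destruct Ht as [Ht0' [Heq _]]. unfold step_eq in Heq.
    set (yt := btilde a y x) in *.
    assert (Hs0 : 0 < 4*PI^2/t) by (apply Rdiv_lt_0_compat; lra).
    assert (Hsx : 4*PI^2/t <= x).
    { apply div_le; [lra|]. assert (4*PI^2 <= t*x) by (apply (Rmult_le_reg_r (/x)); [apply Rinv_0_lt_compat; lra|];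
        replace (t*x*/x) with t by (field; lra); exact Hb4). lra. }
    pose proof (core c h hb n Hs a y x yt (4*PI^2/t) ltac:(lra) ltac:(lra) ltac:(lra)) as Hc0.
    replace (4*PI^2/(4*PI^2/t)) with t in Hc0 by (field; lra).
    eapply Rle_trans; [exact Hc0|].
    assert (HZ : 0 <= Zt h hb n (4*PI^2/yt) t) by (apply Zt_nonneg with c; auto; apply Rdiv_lt_0_compat; lra).
    apply Rle_trans with (1 * Zt h hb n (4*PI^2/yt) t); [|lra].
    apply Rmult_le_compat_r; [exact HZ|].
    apply exp_le1.
    assert (Hin : - a*(y-yt) - a*(x-4*PI^2/t) + 4*PI^2/yt + t - yt - 4*PI^2/t <= 0).
    { assert (0 <= a*(y-yt)) by (apply Rmult_le_pos; lra). lra. }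
    assert (c/24 * (- a*(y-yt) - a*(x-4*PI^2/t) + 4*PI^2/yt + t - yt - 4*PI^2/t) <= c/24*0)
      by (apply Rmult_le_compat_l; lra). lra.
  - destruct b as [x y]; cbn [fst snd] in *. subst b'. cbn [fst snd].
    assert (Hp' : 4*PI^2 < y*x) by lra.
    assert (Hx : 2*PI < x) by lra.
    destruct (step_core a y x Ha H2 Hle Hx Hp') as [t0 [Ht0 [Hb1 [Hb2 [Hb3 [Hb4 [Hb5 Hb6]]]]]]].
    assert (Et : t0 = t) by (destruct Ht as [_ [_ U]]; destruct Ht0 as [P0 [Q0 _]]; apply U; auto).
    subst t0. destruct Ht as [Ht0' [Heq _]]. unfold step_eq in Heq.
    set (yt := btilde a y x) in *.
    assert (Hs0 : 0 < 4*PI^2/t) by (apply Rdiv_lt_0_compat; lra).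
    assert (Hsx : 4*PI^2/t <= x).
    { apply div_le; [lra|]. assert (4*PI^2 <= t*x) by (apply (Rmult_le_reg_r (/x)); [apply Rinv_0_lt_compat; lra|];
        replace (t*x*/x) with t by (field; lra); exact Hb4). lra. }
    pose proof (core c h hb n Hs a x y (4*PI^2/t) yt ltac:(lra) ltac:(lra) ltac:(lra)) as Hc0.
    replace (4*PI^2/(4*PI^2/t)) with t in Hc0 by (field; lra).
    eapply Rle_trans; [exact Hc0|].
    assert (HZ : 0 <= Zt h hb n t (4*PI^2/yt)) by (apply Zt_nonneg with c; auto; apply Rdiv_lt_0_compat; lra).
    apply Rle_trans with (1 * Zt h hb n t (4*PI^2/yt)); [|lra].
    apply Rmult_le_compat_r; [exact HZ|].
    apply exp_le1.
    assert (Hin : - a*(x-4*PI^2/t) - a*(y-yt) + t + 4*PI^2/yt - 4*PI^2/t - yt <= 0).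
    { assert (0 <= a*(y-yt)) by (apply Rmult_le_pos; lra). lra. }
    assert (c/24 * (- a*(x-4*PI^2/t) - a*(y-yt) + t + 4*PI^2/yt - 4*PI^2/t - yt) <= c/24*0)
      by (apply Rmult_le_compat_l; lra). lra.
Qed.

Lemma ln_0 : ln 0 = 0.
Proof. unfold ln. destruct (Rlt_dec 0 0) as [r|r]; [exfalso; exact (Rlt_irrefl 0 r)|reflexivity]. Qed.

Lemma sum1_zero f N : (forall i, f i = 0) -> sum1 f N = 0.
Proof. intros H. induction N; simpl; [reflexivity|]. rewrite IHN, H. ring. Qed.

Theorem theorem1 (alpha c : R) (h hb : nat -> R) (n : nat -> nat) (bL bR : R) :
  0 < alpha <= 1 ->
  cft_spectrum c h hb n ->
  in_D alpha bL bR ->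
  exists (N : nat) (pts : nat -> R * R),
    alg_run alpha bL bR N pts /\
    (forall i, (1 <= i < N)%nat -> 4 * PI ^ 2 < fst (pts i) * snd (pts i)) /\
    2 * PI < fst (pts N) /\ 2 * PI < snd (pts N) /\
    Eerr c h hb n bL bR <=
      ln (sum1 (fun i => ZtL c h hb n alpha (fst (pts i)) (snd (pts i))) N
          + ZtH c h hb n alpha (fst (pts N)) (snd (pts N))).
Proof.
  intros Ha Hs HD.
  pose proof PI_RGT_0 as Hpi.
  destruct (run_exists alpha bL bR Ha HD) as [N [pts [HN [H1 [Hst HNs]]]]].
  exists N, pts.
  assert (Hpos : forall i, (1 <= i <= N)%nat -> 0 < fst (pts i) /\ 0 < snd (pts i)).
  { intros i Hi. destruct (Nat.eq_dec i N) as [->|Hne].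
    - destruct HNs; lra.
    - destruct (Hst i ltac:(lia)) as [_ [_ [_ [A B]]]]. auto. }
  split.
  { split; [exact HN|]. split; [exact H1|]. split; [|exact HNs].
    intros i Hi. destruct (Hst i Hi) as [A [B _]]. auto. }
  split. { intros i Hi. destruct (Hst i Hi) as [_ [_ [A _]]]. exact A. }
  split; [destruct HNs; lra|]. split; [destruct HNs; lra|].
  set (f := fun i => ZtL c h hb n alpha (fst (pts i)) (snd (pts i))).
  set (Z := fun i => Zt h hb n (fst (pts i)) (snd (pts i))).
  assert (Chain : forall k, (S k <= N)%nat -> Z 1%nat <= sum1 f k + Z (S k)).
  { induction k as [|k IH]; intros Hk.
    - simpl. lra.
    - specialize (IH ltac:(lia)).
      destruct (Hpos (S k) ltac:(lia)) as [P1 P2].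
      destruct (Hst (S k) ltac:(lia)) as [_ [B [C _]]].
      assert (E1 : Z (S k) = f (S k) + ZtH c h hb n alpha (fst (pts (S k))) (snd (pts (S k))))
        by (unfold Z, f; apply (Zt_split c h hb n Hs); auto).
      pose proof (step_ineq c h hb n alpha _ _ Hs Ha P1 P2 C B) as E2.
      simpl sum1. change (Zt h hb n (fst (pts (S (S k)))) (snd (pts (S (S k))))) with (Z (S (S k))) in E2. lra. }
  assert (Fin : Z 1%nat <= sum1 f N + ZtH c h hb n alpha (fst (pts N)) (snd (pts N))).
  { destruct N as [|k]; [lia|].
    pose proof (Chain k ltac:(lia)) as Ck.
    destruct (Hpos (S k) ltac:(lia)) as [P1 P2].
    assert (E1 : Z (S k) = f (S k) + ZtH c h hb n alpha (fst (pts (S k))) (snd (pts (S k))))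
      by (unfold Z, f; apply (Zt_split c h hb n Hs); auto).
    simpl sum1. lra. }
  unfold Z in Fin. rewrite H1 in Fin. cbn [fst snd] in Fin.
  destruct (Hpos 1%nat ltac:(lia)) as [PL PR]. rewrite H1 in PL, PR. cbn [fst snd] in PL, PR.
  assert (Hc : 0 <= c) by (destruct Hs; lra).
  unfold Eerr. rewrite (Zpart_Zt c h hb n).
  assert (HZ0 := Zt_nonneg c h hb n Hs bL bR PL PR).
  destruct (Rle_lt_or_eq_dec _ _ HZ0) as [Hp|H0].
  - rewrite ln_mult by (try apply exp_pos; exact Hp). rewrite ln_exp.
    assert (ln (Zt h hb n bL bR) <= ln (sum1 f N + ZtH c h hb n alpha (fst (pts N)) (snd (pts N))))
      by (apply ln_le; auto). fold f. lra.
  - rewrite <- H0, Rmult_0_r, ln_0.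
    assert (Hz : forall k, INR (n k) = 0).
    { intros k. pose proof (term_le_Series (zt h hb n bL bR) k (zt_nonneg h hb n bL bR)
        (zt_ex c h hb n Hs bL bR PL PR)) as T.
      fold (Zt h hb n bL bR) in T. rewrite <- H0 in T.
      pose proof (zt_nonneg h hb n bL bR k) as T2. unfold zt in T, T2.
      assert (Ek : INR (n k) * exp (- h k * bL - hb k * bR) = 0) by lra.
      destruct (Rmult_integral _ _ Ek) as [E|E]; [exact E|].
      pose proof (exp_pos (- h k * bL - hb k * bR)); lra. }
    assert (HL : forall i, f i = 0).
    { intros i. unfold f, ZtL. apply Series_zero. intros k. rewrite Hz.
      destruct (Rle_dec _ _); ring. }
    assert (HH : ZtH c h hb n alpha (fst (pts N)) (snd (pts N)) = 0).
    { unfold ZtH. apply Series_zero. intros k. rewrite Hz.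
      destruct (Rlt_dec _ _); [destruct (Rlt_dec _ _)|]; ring. }
    fold f. rewrite (sum1_zero f N HL), HH, Rplus_0_r, ln_0.
    assert (0 <= c/24*(bL+bR)) by (apply Rmult_le_pos; lra). lra.
Qed.
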